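(* Let $N=2^\ell$ ($\ell$ a positive integer), $\omega=e^{2\pi\mathbf{i}/N}$, $C_2\subseteq C_1\subseteq\mathbb{F}_2^n$ linear codes, $y_x,y_z\in\mathbb{F}_2^n$, $Q=Q(C_1,C_2,y_x,y_z)$ and $Q'=Q(C_1,C_2,0,0)$. Let $b\in\mathbb{Z}_N^n$ with $U(b)Q=Q$, and let $U'=\omega^{y_z\cdot b}U(b_{y_z})$, where $(b_{y_z})_i=b_i$ if $(y_z)_i=0$ and $(b_{y_z})_i=-b_i$ if $(y_z)_i=1$. Fix an encoding $\{w_1,\ldots,w_K\}$, used for both $Q$ and $Q'$. Then: (1) the logical action of $U(b)$ on $Q$ equals the logical action of $U'$ on $Q'$; (2) if the logical action of $U(b)$ on $Q$ is transversal, then the logical action of $U'$ on $Q'$ is transversal; (3) if $U(b)$ acts as the identity on $Q$, then $U'$ acts as the identity on $Q'$.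
   Context: Vectors of $\mathbb{F}_2^n$ are lifted to $\{0,1\}^n$ and $b\cdot x=\sum_ib_ix_i\bmod N$. $U(a)=\mathrm{diag}(1,\omega^a)$ for $a\in\mathbb{Z}_N$ and $U(b)=\bigotimes_iU(b_i)$. The CSS code $Q(C_1,C_2,y_x,y_z)$ is the subspace of $(\mathbb{C}^2)^{\otimes n}$ stabilized by all $(-1)^{y_x\cdot u+y_z\cdot v}X(u)Z(v)$, $u\in C_2$, $v\in C_1^\perp$ ($X(u)=\bigotimes X^{u_i}$, $Z(v)=\bigotimes Z^{v_i}$). An encoding is a set $\{w_1,\ldots,w_K\}\subseteq C_1$ whose classes form a basis of $C_1/C_2$; the logical states of $Q(C_1,C_2,y_x,y_z)$ are $|v\rangle_L=|C_2|^{-1/2}\sum_{u\in C_2}(-1)^{y_x\cdot u}|u+y_z+\sum_iv_iw_i\rangle$, $v\in\mathbb{F}_2^K$. The logical action of a unitary $U$ fixing the code is $\mathcal{E}^{-1}U\mathcal{E}$ on $(\mathbb{C}^2)^{\otimes K}$ where $\mathcal{E}:|v\rangle\mapsto|v\rangle_L$; it is transversal if it equals $\bigotimes_{i=1}^KE_i$ for unitary $E_i\in\mathbb{C}^{2\times2}$. *)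

(* Defs.v *)
From HB Require Import structures.
From mathcomp Require Import all_boot all_order all_algebra.
From mathcomp Require Import complex.
From mathcomp Require Import reals trigo.
Unset Printing Implicit Defensive.
Import Order.TTheory GRing.Theory Num.Theory.
Local Open Scope ring_scope.
Local Open Scope complex_scope.

Definition omega (R : realType) (N : nat) : R[i] :=
  (cos (2 * pi / N%:R))%:C + 'i * (sin (2 * pi / N%:R))%:C.

Definition state (R : realType) (n : nat) := 'rV['F_2]_n -> R[i].

Definition liftZ (N : nat) (a : 'F_2) : 'Z_N := (val a)%:R.

Definition dotZ (N n : nat) (b : 'I_n -> 'Z_N) (x : 'rV['F_2]_n) : 'Z_N :=
  \sum_(i < n) b i * liftZ N (x ord0 i).

(* U(b) = tensor_i diag(1, omega^{b_i}) : |x> |-> omega^{b.x} |x> *)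
Definition Uop (R : realType) (N n : nat) (b : 'I_n -> 'Z_N) (psi : state R n)
  : state R n := fun x => omega R N ^+ (val (dotZ N n b x)) * psi x.

Definition dot2 (n : nat) (y u : 'rV['F_2]_n) : 'F_2 := \sum_(i < n) y ord0 i * u ord0 i.

Definition sgn2 (R : realType) (a : 'F_2) : R[i] := (-1) ^+ (val a).

(* X(u) |x> = |x+u>, so (X(u) psi)(x) = psi(x+u) *)
Definition Xop (R : realType) (n : nat) (u : 'rV['F_2]_n) (psi : state R n) : state R n :=
  fun x => psi (x + u).
Definition Zop (R : realType) (n : nat) (v : 'rV['F_2]_n) (psi : state R n) : state R n :=
  fun x => sgn2 R (dot2 n v x) * psi x.

Definition in_dual (n : nat) (C : {vspace 'rV['F_2]_n}) (v : 'rV['F_2]_n) : Prop :=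
  forall c, c \in C -> dot2 n c v = 0.

Definition in_code (R : realType) (n : nat) (C1 C2 : {vspace 'rV['F_2]_n})
  (yx yz : 'rV['F_2]_n) (psi : state R n) : Prop :=
  forall u v, u \in C2 -> in_dual n C1 v ->
    (fun x => sgn2 R (dot2 n yx u + dot2 n yz v) * Xop R n u (Zop R n v psi) x) = psi.

Definition fixes_code (R : realType) (n : nat) (U : state R n -> state R n)
  (Q : state R n -> Prop) : Prop :=
  (forall psi, Q psi -> Q (U psi)) /\ (forall phi, Q phi -> exists psi, Q psi /\ U psi = phi).

Definition comb (n K : nat) (w : 'I_K -> 'rV['F_2]_n) (v : 'rV['F_2]_K) : 'rV['F_2]_n :=
  \sum_(i < K) v ord0 i *: w i.

(* {w_1..w_K} subset C1 whose classes form a basis of C1/C2 *)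
Definition is_encoding (n K : nat) (C1 C2 : {vspace 'rV['F_2]_n}) (w : 'I_K -> 'rV['F_2]_n)
  : Prop :=
  [/\ forall i, w i \in C1,
      forall c, c \in C1 -> exists v, c - comb n K w v \in C2 &
      forall v, comb n K w v \in C2 -> v = 0].

Definition lstate (R : realType) (n K : nat) (C2 : {vspace 'rV['F_2]_n})
  (yx yz : 'rV['F_2]_n) (w : 'I_K -> 'rV['F_2]_n) (v : 'rV['F_2]_K) : state R n :=
  fun x => ((Num.sqrt (#|[pred u : 'rV['F_2]_n | u \in C2]|%:R : R))^-1)%:C *
    \sum_(u : 'rV['F_2]_n | u \in C2) sgn2 R (dot2 n yx u) * (x == u + yz + comb n K w v)%:R.

Definition encode (R : realType) (n K : nat) (C2 : {vspace 'rV['F_2]_n})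
  (yx yz : 'rV['F_2]_n) (w : 'I_K -> 'rV['F_2]_n) (phi : state R K) : state R n :=
  fun x => \sum_(v : 'rV['F_2]_K) phi v * lstate R n K C2 yx yz w v x.

(* L is the logical action E^{-1} U E, i.e. E o L = U o E (E is injective) *)
Definition is_logical_action (R : realType) (n K : nat) (C2 : {vspace 'rV['F_2]_n})
  (yx yz : 'rV['F_2]_n) (w : 'I_K -> 'rV['F_2]_n) (U : state R n -> state R n)
  (L : state R K -> state R K) : Prop :=
  forall phi, encode R n K C2 yx yz w (L phi) = U (encode R n K C2 yx yz w phi).

Definition unitary2 (R : realType) (E : 'M[R[i]]_2) : Prop :=
  E *m (map_mx Num.conj E)^T = 1%:M.

Definition tensor_op (R : realType) (K : nat) (E : 'I_K -> 'M[R[i]]_2) (phi : state R K)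
  : state R K :=
  fun v => \sum_(u : 'rV['F_2]_K) (\prod_(i < K) E i (v ord0 i) (u ord0 i)) * phi u.

Definition transversal_action (R : realType) (K : nat) (L : state R K -> state R K) : Prop :=
  exists E : 'I_K -> 'M[R[i]]_2, (forall i, unitary2 R (E i)) /\ forall phi, L phi = tensor_op R K E phi.

Definition bflip (N n : nat) (yz : 'rV['F_2]_n) (b : 'I_n -> 'Z_N) : 'I_n -> 'Z_N :=
  fun i => if yz ord0 i == 1 then - b i else b i.

Definition Uprime (R : realType) (N n : nat) (yz : 'rV['F_2]_n) (b : 'I_n -> 'Z_N)
  (psi : state R n) : state R n :=
  fun x => omega R N ^+ (val (dotZ N n b yz)) * Uop R N n (bflip N n yz b) psi x.

(* Main.v *)
Require Import Defs.
From HB Require Import structures.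
From mathcomp Require Import all_boot all_order all_algebra.
From mathcomp Require Import complex.
From mathcomp Require Import reals trigo.
From mathcomp Require Import ring.
From mathcomp.classical Require Import boolp.
Import Order.TTheory GRing.Theory Num.Theory.
Local Open Scope ring_scope.
Local Open Scope complex_scope.
Set Implicit Arguments. Unset Strict Implicit.

Lemma F2cases (a : 'F_2) : a = 0 \/ a = 1.
Proof. case: a => [[|[|//]] ?]; [left|right]; exact: val_inj. Qed.

Lemma F2_11 : (1 + 1 : 'F_2) = 0. Proof. exact: val_inj. Qed.

Lemma F2_aa (a : 'F_2) : a + a = 0.
Proof. by case: (F2cases a) => ->; rewrite ?addr0 ?F2_11. Qed.

Lemma sgn2D (R : realType) (a b : 'F_2) : sgn2 R (a + b) = sgn2 R a * sgn2 R b.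
Proof.
by case: (F2cases a) => ->; case: (F2cases b) => ->;
  rewrite ?F2_11 ?addr0 ?add0r /sgn2 /= ?expr0 ?expr1 ?mulr1 ?mul1r ?mulrNN ?mulr1.
Qed.

Lemma sgn2_0 (R : realType) : sgn2 R 0 = 1. Proof. by rewrite /sgn2 expr0. Qed.

Lemma sgn2_sq (R : realType) a : sgn2 R a * sgn2 R a = 1.
Proof. by rewrite -sgn2D F2_aa sgn2_0. Qed.

Lemma liftZ0 N : liftZ N 0 = 0. Proof. by []. Qed.
Lemma liftZ1 N : liftZ N 1 = 1. Proof. by rewrite /liftZ /=. Qed.

Lemma liftZ_step N (a c : 'F_2) (z : 'Z_N) :
  z * liftZ N (a + c) = z * liftZ N c + (if c == 1 then - z else z) * liftZ N a.
Proof.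
case: (F2cases a) => ->; case: (F2cases c) => ->;
  rewrite ?F2_11 ?addr0 ?add0r ?liftZ0 ?liftZ1 /= ?mulr0 ?mulr1 ?addr0 ?add0r //.
by rewrite subrr.
Qed.

Lemma dotZ_shift N n (b : 'I_n -> 'Z_N) (yz t : 'rV['F_2]_n) :
  dotZ N n b (t + yz) = dotZ N n b yz + dotZ N n (bflip N n yz b) t.
Proof.
rewrite /dotZ -big_split /=; apply: eq_bigr => i _.
by rewrite mxE liftZ_step /bflip.
Qed.


Definition ee (R : realType) (t : R) : R[i] := (cos t)%:C + 'i * (sin t)%:C.

Lemma eeE (R : realType) t : ee t = (cos t +i* sin t) :> R[i].
Proof. rewrite /ee; simpc. by []. Qed.

Lemma eeD (R : realType) (a b : R) : ee a * ee b = ee (a + b).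
Proof. rewrite !eeE cosD sinD; simpc. congr (_ +i* _). by rewrite addrC. Qed.

Lemma eeX (R : realType) (t : R) k : ee t ^+ k = ee (k%:R * t).
Proof.
elim: k => [|k IH]; first by rewrite expr0 mul0r eeE cos0 sin0.
by rewrite exprS IH eeD mulrSr mulrDl mul1r addrC.
Qed.

Lemma omegaN (R : realType) N : (0 < N)%N -> omega R N ^+ N = 1.
Proof.
move=> hN; have -> : omega R N = ee (2 * pi / N%:R) by [].
rewrite eeX mulrCA mulfV ?pnatr_eq0 -?lt0n // mulr1 eeE.
have -> : 2 * pi = pi *+ 2 :> R by rewrite mulr_natl.
by rewrite cos2pi sin2pi.
Qed.

Lemma omegaZD (R : realType) l (a b : 'Z_(2 ^ l)) : (0 < l)%N ->
  omega R (2 ^ l) ^+ val (a + b) = omega R (2 ^ l) ^+ val a * omega R (2 ^ l) ^+ val b.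
Proof.
move=> hl; have h2 : (1 < 2 ^ l)%N by rewrite -{1}(expn0 2) ltn_exp2l.
have -> : a + b = ((val a + val b)%:R : 'Z_(2^l)) by rewrite natrD !natr_Zp.
rewrite /= val_Zp_nat // -exprD {2}(divn_eq (val a + val b) (2 ^ l)) exprD mulnC exprM.
by rewrite omegaN ?expr1n ?mul1r // ltnW.
Qed.

Ltac mxring := apply/matrixP => ? ?; rewrite ?mxE; ring.

Section Dot.
Variable n : nat.
Implicit Types y u : 'rV['F_2]_n.
Lemma dot2D y u u' : dot2 n y (u + u') = dot2 n y u + dot2 n y u'.
Proof. by rewrite /dot2 -big_split; apply: eq_bigr => i _; rewrite mxE mulrDr. Qed.
Lemma dot2C y u : dot2 n y u = dot2 n u y.
Proof. by apply: eq_bigr => i _; rewrite mulrC. Qed.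
Lemma dot2_0r y : dot2 n y 0 = 0.
Proof. by rewrite /dot2 big1 // => i _; rewrite mxE mulr0. Qed.
Lemma dot2_0l y : dot2 n 0 y = 0.
Proof. by rewrite dot2C dot2_0r. Qed.
End Dot.

Definition cst (R : realType) n (C2 : {vspace 'rV['F_2]_n}) : R[i] :=
  ((Num.sqrt (#|[pred u : 'rV['F_2]_n | u \in C2]|%:R : R))^-1)%:C.
Definition ind (R : realType) n (C2 : {vspace 'rV['F_2]_n}) (yx a x : 'rV['F_2]_n) : R[i] :=
  if x - a \in C2 then sgn2 R (dot2 n yx (x - a)) else 0.

Arguments cst R n C2 : clear implicits.
Arguments ind R n C2 yx a x : clear implicits.

Lemma cst_neq0 (R : realType) n C2 : cst R n C2 != 0.
Proof.
have hc : (0 < #|[pred u : 'rV['F_2]_n | u \in C2]|)%N.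
  by apply/card_gt0P; exists 0; rewrite inE mem0v.
by rewrite /cst eq_complex /= eqxx andbT invr_eq0 sqrtr_eq0 lern0 -lt0n hc.
Qed.

Lemma sum_ind (R : realType) n (C2 : {vspace 'rV['F_2]_n}) (f : 'rV['F_2]_n -> R[i]) x a :
  \sum_(u | u \in C2) f u * (x == u + a)%:R = if x - a \in C2 then f (x - a) else 0.
Proof.
have E u : (x == u + a) = (u == x - a).
  by apply/eqP/eqP => [->|->]; rewrite ?addrK ?subrK.
under eq_bigr do rewrite E.
case: (boolP (x - a \in C2)) => h.
  rewrite (bigD1 (x - a)) //= eqxx mulr1 big1 ?addr0 // => u /andP [_ hu].
  by rewrite (negbTE hu) mulr0.
rewrite big1 // => u hu; have /negbTE -> : u != x - a by apply: contraNneq h => <-.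
by rewrite mulr0.
Qed.

Lemma lstateE (R : realType) n K C2 yx yz w v x :
  lstate R n K C2 yx yz w v x = cst R n C2 * ind R n C2 yx (yz + comb n K w v) x.
Proof.
rewrite /lstate /cst; congr (_ * _).
under eq_bigr do rewrite -addrA.
by rewrite sum_ind.
Qed.

Lemma combB n K w (v v' : 'rV['F_2]_K) : comb n K w (v - v') = comb n K w v - comb n K w v'.
Proof. by rewrite /comb -sumrB; apply: eq_bigr => i _; rewrite !mxE scalerBl. Qed.

Lemma comb0 n K w : comb n K w 0 = 0.
Proof. by rewrite -(subrr 0) combB subrr. Qed.

Lemma comb_in n K (C1 : {vspace 'rV['F_2]_n}) w v : (forall i, w i \in C1) -> comb n K w v \in C1.
Proof. by move=> h; rewrite /comb; apply: memv_suml => i _; apply: memvZ. Qed.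

Lemma enc_at (R : realType) n K C1 C2 w yx yz phi v : is_encoding n K C1 C2 w ->
  encode R n K C2 yx yz w phi (yz + comb n K w v) = cst R n C2 * phi v.
Proof.
case=> _ _ h3; rewrite /encode (bigD1 v) //= big1 ?addr0.
  by rewrite lstateE /ind subrr mem0v dot2_0r sgn2_0 mulr1 mulrC.
move=> v' hv'; rewrite lstateE /ind.
have -> : yz + comb n K w v - (yz + comb n K w v') = comb n K w (v - v').
  by rewrite combB; mxring.
case: ifP => [/h3 /eqP|]; last by rewrite !mulr0.
by rewrite subr_eq0 eq_sym (negbTE hv').
Qed.

Lemma enc_inj (R : realType) n K C1 C2 w yx yz phi psi : is_encoding n K C1 C2 w ->
  encode R n K C2 yx yz w phi = encode R n K C2 yx yz w psi -> phi = psi.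
Proof.
move=> hw E; apply: funext => v.
have := congr1 (fun f => f (yz + comb n K w v)) E => /=.
by rewrite !(enc_at _ _ _ _ hw); apply: mulfI; apply: cst_neq0.
Qed.

Lemma lstate_in_code (R : realType) n K (C1 C2 : {vspace 'rV['F_2]_n}) yx yz w v :
  (C2 <= C1)%VS -> (forall i, w i \in C1) ->
  in_code R n C1 C2 yx yz (lstate R n K C2 yx yz w v).
Proof.
move=> hC hw1 u0 v0 hu0 hv0; apply: funext => x /=.
rewrite /Xop /Zop !lstateE /ind.
have -> : x + u0 - (yz + comb n K w v) = (x - (yz + comb n K w v)) + u0 by mxring.
rewrite (rpredDr _ hu0).
case: ifP => h; last by rewrite !mulr0.
have hc1 : x + u0 - yz \in C1.
  have -> : x + u0 - yz = (x - (yz + comb n K w v)) + u0 + comb n K w v by mxring.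
  apply: memvD; last exact: comb_in.
  by apply: memvD; apply: (subvP hC).
have -> : x + u0 = yz + (x + u0 - yz) by mxring.
rewrite dot2D (dot2C v0 (_ - _)) (hv0 _ hc1) addr0 dot2D !sgn2D (dot2C v0 yz).
set sA := sgn2 R (dot2 n yx u0); set sB := sgn2 R (dot2 n yz v0).
transitivity ((sA * sA) * (sB * sB) * (cst R n C2 * sgn2 R (dot2 n yx (x - (yz + comb n K w v))))); first ring.
by rewrite !sgn2_sq !mul1r.
Qed.

Lemma cancel_aux (R : realType) (s W1 W0 c : R[i]) :
  s * s = 1 -> c != 0 -> s * (W1 * (c * s)) = W0 * c -> W1 = W0.
Proof.
move=> hs hc E; apply: (mulIf hc); rewrite -E.
transitivity ((s * s) * (W1 * c)); first by rewrite hs mul1r.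
ring.
Qed.

Lemma eig (R : realType) l n K (C1 C2 : {vspace 'rV['F_2]_n}) yx yz w v b u :
  (C2 <= C1)%VS -> (forall i, w i \in C1) ->
  fixes_code R n (Uop R (2 ^ l) n b) (in_code R n C1 C2 yx yz) -> u \in C2 ->
  omega R (2 ^ l) ^+ val (dotZ (2 ^ l) n b (u + (yz + comb n K w v))) =
  omega R (2 ^ l) ^+ val (dotZ (2 ^ l) n b (yz + comb n K w v)).
Proof.
move=> hC hw1 [hb _] hu.
have H := hb _ (@lstate_in_code R n K C1 C2 yx yz w v hC hw1).
have hd : in_dual n C1 0 by move=> c _; rewrite dot2_0r.
have := congr1 (fun f => f (yz + comb n K w v)) (H u 0 hu hd) => /=.
rewrite /Xop /Zop /Uop !lstateE /ind dot2_0l dot2_0r addr0 sgn2_0 mul1r subrr mem0v dot2_0r sgn2_0.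
have -> : yz + comb n K w v + u - (yz + comb n K w v) = u by mxring.
rewrite hu (addrC (yz + _) u) mulr1.
set W1 := omega R _ ^+ _; set W0 := omega R _ ^+ _; set sA := sgn2 R _ => E.
move: E; apply: cancel_aux; [exact: sgn2_sq | exact: cst_neq0].
Qed.

Definition LamOp (R : realType) l n K (w : 'I_K -> 'rV['F_2]_n) yz (b : 'I_n -> 'Z_(2 ^ l))
  (phi : state R K) : state R K :=
  fun v => omega R (2 ^ l) ^+ val (dotZ (2 ^ l) n b (yz + comb n K w v)) * phi v.

Arguments LamOp R l n K w yz b phi : clear implicits.

Lemma UE (R : realType) l n K (C1 C2 : {vspace 'rV['F_2]_n}) yx yz w b phi :
  (C2 <= C1)%VS -> (forall i, w i \in C1) ->
  fixes_code R n (Uop R (2 ^ l) n b) (in_code R n C1 C2 yx yz) ->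
  Uop R (2 ^ l) n b (encode R n K C2 yx yz w phi) =
  encode R n K C2 yx yz w (LamOp R l n K w yz b phi).
Proof.
move=> hC hw1 hb; apply: funext => x.
rewrite /Uop /encode /LamOp mulr_sumr; apply: eq_bigr => v _.
rewrite lstateE /ind; case: ifP => h; last by rewrite !mulr0.
have -> : dotZ (2 ^ l) n b x = dotZ (2 ^ l) n b ((x - (yz + comb n K w v)) + (yz + comb n K w v)).
  by rewrite subrK.
rewrite (@eig R l n K C1 C2 yx yz w v b _ hC hw1 hb h).
by rewrite mulrA.
Qed.

Lemma U'E (R : realType) l n K (C1 C2 : {vspace 'rV['F_2]_n}) yx yz w b phi :
  (0 < l)%N -> (C2 <= C1)%VS -> (forall i, w i \in C1) ->
  fixes_code R n (Uop R (2 ^ l) n b) (in_code R n C1 C2 yx yz) ->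
  Uprime R (2 ^ l) n yz b (encode R n K C2 0 0 w phi) =
  encode R n K C2 0 0 w (LamOp R l n K w yz b phi).
Proof.
move=> hl hC hw1 hb; apply: funext => x.
rewrite /Uprime /Uop /encode /LamOp !mulr_sumr; apply: eq_bigr => v _.
rewrite !lstateE /ind; case: ifP => h; last by rewrite !mulr0.
rewrite mulrA -omegaZD // -dotZ_shift.
have -> : x + yz = (x - (0 + comb n K w v)) + (yz + comb n K w v) by mxring.
rewrite (@eig R l n K C1 C2 yx yz w v b _ hC hw1 hb h).
by rewrite mulrA.
Qed.

Lemma rowF2_aa n (y : 'rV['F_2]_n) : y + y = 0.
Proof. by apply/matrixP => i j; rewrite !mxE F2_aa. Qed.

Local Close Scope complex_scope.
Unset Implicit Arguments.

Theorem corollary2p8 (R : realType) (l : nat) (hl : (0 < l)%N) (n K : nat)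
  (C1 C2 : {vspace 'rV['F_2]_n}) (hC : (C2 <= C1)%VS)
  (yx yz : 'rV['F_2]_n) (b : 'I_n -> 'Z_(2 ^ l))
  (hb : fixes_code R n (Uop R (2 ^ l) n b) (in_code R n C1 C2 yx yz))
  (w : 'I_K -> 'rV['F_2]_n) (hw : is_encoding n K C1 C2 w) :
  (* (1) *)
  ((exists L, is_logical_action R n K C2 yx yz w (Uop R (2 ^ l) n b) L) /\
   (forall L, is_logical_action R n K C2 yx yz w (Uop R (2 ^ l) n b) L <->
              is_logical_action R n K C2 0 0 w (Uprime R (2 ^ l) n yz b) L)) /\
  (* (2) *)
  ((forall L, is_logical_action R n K C2 yx yz w (Uop R (2 ^ l) n b) L -> transversal_action R K L) ->
   (forall L, is_logical_action R n K C2 0 0 w (Uprime R (2 ^ l) n yz b) L -> transversal_action R K L)) /\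
  (* (3) *)
  ((forall psi, in_code R n C1 C2 yx yz psi -> Uop R (2 ^ l) n b psi = psi) ->
   (forall psi, in_code R n C1 C2 0 0 psi -> Uprime R (2 ^ l) n yz b psi = psi)).
Proof.
have hw1 : forall i, w i \in C1 by case: hw.
have equiv : forall L, is_logical_action R n K C2 yx yz w (Uop R (2 ^ l) n b) L <->
              is_logical_action R n K C2 0 0 w (Uprime R (2 ^ l) n yz b) L.
  move=> L; split => H phi.
    rewrite (@U'E R l n K C1 C2 yx yz w b _ hl hC hw1 hb); congr (encode _ _ _ _ _ _ _ _).
    by apply: (@enc_inj R n K C1 C2 w yx yz _ _ hw); rewrite H (@UE R l n K C1 C2 yx yz w b _ hC hw1 hb).
  rewrite (@UE R l n K C1 C2 yx yz w b _ hC hw1 hb); congr (encode _ _ _ _ _ _ _ _).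
  by apply: (@enc_inj R n K C1 C2 w 0 0 _ _ hw); rewrite H (@U'E R l n K C1 C2 yx yz w b _ hl hC hw1 hb).
split; [split|split].
- by exists (LamOp R l n K w yz b) => phi; rewrite (@UE R l n K C1 C2 yx yz w b _ hC hw1 hb).
- exact: equiv.
- by move=> H2 L /equiv; apply: H2.
move=> H3 psi hpsi; apply: funext => x.
pose phi : state R n := fun x => sgn2 R (dot2 n yx (x + yz)) * psi (x + yz).
have hphi : in_code R n C1 C2 yx yz phi.
  move=> u v hu hv; apply: funext => z /=.
  have := congr1 (fun f => f (z + yz)) (hpsi u v hu hv) => /=.
  rewrite /Xop /Zop /phi !dot2_0l addr0 sgn2_0 mul1r.
  have -> : z + u + yz = z + yz + u by mxring.
  move=> E; rewrite -E.
  rewrite !dot2D !sgn2D (dot2C v yz).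
  set sA := sgn2 R (dot2 n yx u); set sB := sgn2 R (dot2 n yz v).
  set sC := sgn2 R (dot2 n v z); set sF := sgn2 R (dot2 n yx z); set sG := sgn2 R (dot2 n yx yz).
  set sD := sgn2 R (dot2 n v u).
  set P := psi _.
  transitivity ((sA * sA) * (sB * sC * sD * (sF * sG)) * P); first ring.
  by rewrite sgn2_sq mul1r; ring.
have := congr1 (fun f => f (x + yz)) (H3 _ hphi) => /=.
rewrite /Uop /phi -addrA rowF2_aa addr0.
move=> E; rewrite /Uprime /Uop mulrA -omegaZD // -dotZ_shift.
have hs : sgn2 R (dot2 n yx x) != 0.
  apply/eqP => s0; have := sgn2_sq R (dot2 n yx x); rewrite s0 mul0r => /eqP.
  by rewrite eq_sym oner_eq0.
by apply: (mulfI hs); rewrite mulrCA E.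
Qed.
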